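(* Let $\mathcal{R}$ be a finite ring with $q$ elements, $\mathcal{R}^- = \mathcal{R}\setminus\{0\}$, and let $\Gamma$ be a finite index set with $|\Gamma| = N$. Let $M \in \mathbb{N}$ and let $\mathbf{k} = (k_\alpha)_{\alpha\in\mathcal{R}^-} \in \mathbb{N}^{q-1}$ satisfy $\sum_{\alpha\in\mathcal{R}^-} \alpha\cdot k_\alpha = 0$ in $\mathcal{R}$ and $\sum_{\alpha\in\mathcal{R}^-} k_\alpha \le N$. Suppose that for each $\alpha\in\mathcal{R}^-$ we are given nonnegative integers $x_i^{(\alpha)}$, $i \in \Gamma$, such that $$\sum_{i\in\Gamma} x_i^{(\alpha)} = k_\alpha M \quad\text{for all } \alpha\in\mathcal{R}^-,\qquad \sum_{\alpha\in\mathcal{R}^-} x_i^{(\alpha)} \le M \quad\text{for all } i\in\Gamma.$$ Then there exist nonnegative integers $\{w_{\mathbf{a}} : \mathbf{a}\in\mathcal{C}_\Gamma^{(\mathbf{k})}\}$ such that (1) $\sum_{\mathbf{a}\in\mathcal{C}_\Gamma^{(\mathbf{k})}} w_{\mathbf{a}} = M$, and (2) for all $\alpha\in\mathcal{R}^-$ and all $i\in\Gamma$, $x_i^{(\alpha)} = \sum_{\mathbf{a}\in\mathcal{C}_\Gamma^{(\mathbf{k})},\, a_i=\alpha} w_{\mathbf{a}}$.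
   Context: For $k\in\mathbb{N}$ and $\alpha\in\mathcal{R}$, $\alpha\cdot k$ denotes $0$ if $k=0$ and the sum $\alpha+\cdots+\alpha$ ($k$ terms) if $k>0$. The single parity check code indexed by $\Gamma$ is $\mathcal{C}_\Gamma = \{\mathbf{a}=(a_i)_{i\in\Gamma}\in\mathcal{R}^N : \sum_{i\in\Gamma} a_i = 0\}$. The map $\boldsymbol{\kappa}_\Gamma:\mathcal{C}_\Gamma\to\mathbb{N}^{q-1}$ is given by $(\boldsymbol{\kappa}_\Gamma(\mathbf{a}))_\alpha = |\{i\in\Gamma : a_i=\alpha\}|$ for $\alpha\in\mathcal{R}^-$, and $\mathcal{C}_\Gamma^{(\mathbf{k})} = \{\mathbf{a}\in\mathcal{C}_\Gamma : \boldsymbol{\kappa}_\Gamma(\mathbf{a}) = \mathbf{k}\}$. *)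

(* Defs.v *)
From HB Require Import structures.
From mathcomp Require Import all_boot all_order all_algebra.
Set Implicit Arguments. Unset Strict Implicit. Unset Printing Implicit Defensive.
Import GRing.Theory.
Local Open Scope ring_scope.

Definition spc (R : finPzRingType) (Gamma : finType) : pred {ffun Gamma -> R} :=
  fun a => \sum_(i : Gamma) a i == 0.

Definition kappa (R : finPzRingType) (Gamma : finType) (a : {ffun Gamma -> R})
  (alpha : R) : nat := #|[set i : Gamma | a i == alpha]|.

(* C_Gamma^(k): k is indexed by R, only its values on R^- = R \ {0} matter. *)
Definition spc_k (R : finPzRingType) (Gamma : finType) (k : R -> nat)
  : pred {ffun Gamma -> R} :=
  fun a => spc a && [forall alpha : R, (alpha != 0) ==> (kappa a alpha == k alpha)].

(* Main.v *)
Require Import Defs.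
From HB Require Import structures.
From mathcomp Require Import all_boot all_order all_algebra.
Import GRing.Theory.
Lemma sum_cover (B : finType) (P Q R : pred B) (c d : B -> nat) :
  (forall b, (if P b then c b else 0) <= (if Q b then c b else 0) + (if R b then d b else 0)) ->
  \sum_(b | P b) c b <= \sum_(b | Q b) c b + \sum_(b | R b) d b.
Proof.
move=> H; rewrite (big_mkcond P) (big_mkcond Q) (big_mkcond R) -big_split.
by apply: leq_sum => b _.
Qed.

Lemma exU (A B : finType) (e : A -> B -> bool) (S T : {set A}) b :
  [exists a in S :|: T, e a b] = [exists a in S, e a b] || [exists a in T, e a b].
Proof.
apply/existsP/orP.
- case=> a /andP [/setUP [aS|aT] eab]; [left|right]; apply/existsP; exists a; by rewrite ?aS ?aT.
- case=> /existsP [a /andP [aX eab]]; exists a; by rewrite inE aX ?orbT.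
Qed.

Lemma hall (A B : finType) (e : A -> B -> bool) (b0 : B) n :
  forall (L : {set A}) (c : B -> nat), #|L| <= n ->
  (forall T : {set A}, T \subset L -> #|T| <= \sum_(b | [exists a in T, e a b]) c b) ->
  exists f : A -> B, (forall a, a \in L -> e a (f a)) /\
     forall b, #|[set a in L | f a == b]| <= c b.
Proof.
have triv : forall (L : {set A}) (c : B -> nat), L = set0 -> exists f : A -> B, (forall a, a \in L -> e a (f a)) /\
     forall b, #|[set a in L | f a == b]| <= c b.
  move=> L c ->; exists (fun _ => b0); split; first by move=> a; rewrite inE.
  move=> b; have -> : [set a in set0 | b0 == b] = set0 :> {set A}.
    by apply/setP => a; rewrite !inE.
  by rewrite cards0.
elim: n => [|n IH] L c hL hH.
  by apply: triv; apply/eqP; rewrite -cards_eq0 -leqn0.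
case: (boolP (L == set0)) => [/eqP L0 | Ln0]; first by apply: triv.
case: (boolP [exists T : {set A}, [&& T \subset L, T != set0, T != L &
     #|T| == \sum_(b | [exists a in T, e a b]) c b]]).
- case/existsP => T /and4P [TL Tn0 TnL /eqP Teq].
  have TltL : #|T| < #|L| by apply: proper_card; rewrite properEneq TnL TL.
  have Tn : #|T| <= n by rewrite -ltnS (leq_trans TltL hL).
  have [f1 [f1e f1c]] := IH T c Tn
      (fun S SU => hH S (subset_trans SU TL)).
  pose c2 := fun b => if [exists a in T, e a b] then 0 else c b.
  have L2n : #|L :\: T| <= n.
    rewrite cardsD (setIidPr TL) leq_subLR; apply: leq_trans hL _.
    by rewrite -add1n leq_add2r card_gt0.
  have hH2 : forall S : {set A}, S \subset L :\: T -> #|S| <= \sum_(b | [exists a in S, e a b]) c2 b.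
    move=> S SL2; move: S SL2 => S SL2.
    have SUL : S :|: T \subset L.
      by rewrite subUset TL andbT (subset_trans SL2 (subsetDl L T)).
    have h := hH _ SUL.
    have disj : S :&: T = set0.
      apply/setP => x; rewrite !inE; case xS: (x \in S) => //=.
      by have := subsetP SL2 x xS; rewrite inE => /andP [/negbTE ->].
    rewrite cardsU disj cards0 subn0 in h.
    have h2 : \sum_(b | [exists a in S :|: T, e a b]) c b <=
              #|T| + \sum_(b | [exists a in S, e a b]) c2 b.
      rewrite Teq; apply: sum_cover => b; rewrite /c2 exU.
      case: [exists a in T, e a b]; case: [exists a in S, e a b] => /=; rewrite ?leq_addr ?leq_addl //.
    by rewrite -(leq_add2l #|T|) [#|T| + #|S|]addnC (leq_trans h h2).
  have [f2 [f2e f2c]] := IH (L :\: T) c2 L2n hH2.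
  exists (fun a => if a \in T then f1 a else f2 a); split.
    move=> a aL; case: ifP => aT; [exact: f1e | apply: f2e; by rewrite inE aT aL].
  move=> b.
  have sub : [set a in L | (if a \in T then f1 a else f2 a) == b] \subset
     [set a in T | f1 a == b] :|: [set a in L :\: T | f2 a == b].
    apply/subsetP => a; rewrite !inE => /andP [aL].
    by case: (a \in T) => /= fb; rewrite ?fb ?aL ?orbT.
  apply: leq_trans (subset_leq_card sub) _; rewrite cardsU.
  apply: leq_trans (leq_subr _ _) _.
  have h2 := f2c b; rewrite /c2 in h2.
  case: (boolP [exists a in T, e a b]) => NT; rewrite ?NT /= in h2.
    by rewrite -[c b]addn0 leq_add ?f1c.
  have -> : [set a in T | f1 a == b] = set0.
    apply/eqP; rewrite -subset0; apply/subsetP => a; rewrite !inE => /andP [aT /eqP fa].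
    case/negP: NT; apply/existsP; exists a; by rewrite aT -fa f1e.
  by rewrite cards0 add0n; rewrite (negbTE NT) in h2.
- move=> /existsPn noT.
  case/set0Pn: Ln0 => a aL.
  have [b /andP [eab cb]] : exists b, e a b && (0 < c b).
    case: (boolP [exists b, e a b && (0 < c b)]) => [/existsP // | /existsPn H].
    have h := hH [set a] ltac:(by rewrite sub1set).
    rewrite cards1 big1 // in h.
    move=> b /existsP [a' /andP [/set1P -> eab]].
    by have := H b; rewrite eab /= lt0n negbK => /eqP.
  pose c' := fun b' => if b' == b then (c b).-1 else c b'.
  have L'n : #|L :\ a| <= n.
    by have := cardsD1 a L; rewrite aL add1n => h; rewrite -ltnS -h.
  have hH' : forall T : {set A}, T \subset L :\ a -> #|T| <= \sum_(b' | [exists a' in T, e a' b']) c' b'.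
    move=> T TL'; case: (boolP (T == set0)) => [/eqP -> | Tn0]; first by rewrite cards0.
    have TL : T \subset L := subset_trans TL' (subsetDl L [set a]).
    have aT : a \notin T.
      by apply/negP => aT; have := subsetP TL' a aT; rewrite !inE eqxx.
    have TnL : T != L by apply/eqP => TL0; rewrite TL0 aL in aT.
    have hlt : #|T| < \sum_(b' | [exists a' in T, e a' b']) c b'.
      by rewrite ltn_neqAle hH // andbT; have := noT T; rewrite TL Tn0 TnL.
    have hc : \sum_(b' | [exists a' in T, e a' b']) c b' <=
              (\sum_(b' | [exists a' in T, e a' b']) c' b').+1.
      case: (boolP [exists a' in T, e a' b]) => Nb.
        rewrite (bigD1 b Nb) (bigD1 b Nb) /c' eqxx -addSn prednK // leq_add2l.
        by apply/eq_leq/eq_bigr => i /andP [_ /negbTE hib]; rewrite hib.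
      apply: leqW; apply/eq_leq/eq_bigr => i Ni; rewrite /c'.
      by case: eqP => [ib|//]; rewrite -ib Ni in Nb.
    by rewrite -ltnS (leq_trans hlt hc).
  have [f' [f'e f'c]] := IH (L :\ a) c' L'n hH'.
  exists (fun a' => if a' == a then b else f' a'); split.
    move=> a' a'L; case: eqP => [-> //| na]; apply: f'e.
    by rewrite !inE a'L andbT; apply/eqP.
  move=> b'; rewrite (cardsD1 a).
  set S := [set a' in L | _].
  have -> : (a \in S) = (b == b') by rewrite inE aL eqxx.
  have sub : S :\ a \subset [set a' in L :\ a | f' a' == b'].
    apply/subsetP => a'; rewrite !inE => /andP [na /andP [a'L]].
    by rewrite (negbTE na) => ->; rewrite a'L.
  apply: leq_trans (leq_add (leqnn _) (subset_leq_card sub)) _.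
  apply: leq_trans (leq_add (leqnn _) (f'c b')) _.
  rewrite /c'; case: (eqVneq b' b) => [->|nb].
  by rewrite add1n prednK.
  by [].
Qed.
Lemma sumT1 (I : finType) : \sum_(i : I) 1 = #|I|.
Proof. by rewrite sum1_card. Qed.

Lemma sum_eq_le (I : finType) (F G : I -> nat) :
  (forall a, F a <= G a) -> \sum_a F a = \sum_a G a -> forall a, F a = G a.
Proof.
move=> le eqs a; apply/eqP; rewrite eqn_leq le /= leqNgt; apply/negP => lt.
have : \sum_a F a < \sum_a G a.
  rewrite (bigD1 a) //= [X in _ < X](bigD1 a) //= -addSn leq_add //.
  by apply: leq_sum => i _.
by rewrite eqs ltnn.
Qed.

Lemma card_part (I J : finType) (f : I -> J) : \sum_(j : J) #|[set i | f i == j]| = #|I|.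
Proof.
rewrite -sumT1 (partition_big f xpredT) //=; apply: eq_bigr => j _.
by rewrite sum1dep_card.
Qed.

Lemma sum_bool_card (I J : finType) (f : I -> J) a : \sum_(i : I) (f i == a : nat) = #|[set i | f i == a]|.
Proof.
rewrite -sum1dep_card [RHS]big_mkcond /=; apply: eq_bigr => i _.
by case: (f i == a).
Qed.

Definition Gk (R Gamma : finType) (K : R -> nat) (f : {ffun Gamma -> R}) :=
  [forall a, #|[set i | f i == a]| == K a].
Arguments Gk {R Gamma}.

Lemma gen (R Gamma : finType) (r0 : R) M : forall (X : R -> Gamma -> nat) (K : R -> nat),
  (forall i, \sum_a X a i = M) -> (forall a, \sum_i X a i = K a * M) ->
  exists w : {ffun Gamma -> R} -> nat, \sum_(f | Gk K f) w f = M /\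
   forall a i, X a i = \sum_(f | Gk K f && (f i == a)) w f.
Proof.
elim: M => [|M IH] X K hc hr.
  exists (fun _ => 0); split; first by rewrite big1.
  move=> a i; rewrite big1 //.
  have := hc i; rewrite (bigD1 a) //= => /eqP; rewrite addn_eq0 => /andP [/eqP -> _].
  done.
have hall_c : forall T : {set Gamma}, T \subset setT ->
    #|T| <= \sum_(a | [exists i in T, 0 < X a i]) K a.
  move=> T _; rewrite -(leq_pmul2r (ltn0Sn M)) big_distrl /= -sum1_card big_distrl /=.
  under eq_bigr => i _ do rewrite mul1n -(hc i).
  rewrite exchange_big /= (bigID (fun a => [exists i in T, 0 < X a i])) /=.
  rewrite [X in _ + X]big1 ?addn0; last first.
    move=> a /existsPn Na; apply: big1 => i iT.
    by have := Na i; rewrite iT /= lt0n negbK => /eqP.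
  apply: leq_sum => a _; rewrite -hr.
  rewrite [X in _ <= X](bigID (fun i => i \in T)) /=.
  exact: leq_addr.
have [f [fe fc]] := @hall Gamma R (fun i a => 0 < X a i) r0 #|Gamma| setT K ltac:(by rewrite cardsT) hall_c.
have fc' : forall a, #|[set i | f i == a]| <= K a.
  move=> a; have -> : [set i | f i == a] = [set i in setT | f i == a] by apply/setP => i; rewrite !inE.
  exact: fc.
have sumK : \sum_a K a = #|Gamma|.
  apply/eqP; rewrite -(eqn_pmul2r (ltn0Sn M)) big_distrl /=.
  under eq_bigr => a _ do rewrite -hr.
  rewrite exchange_big /=; under eq_bigr => i _ do rewrite hc.
  by rewrite sum_nat_const.
have kap : forall a, #|[set i | f i == a]| = K a.
  by apply: sum_eq_le => //; rewrite sumK card_part.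
pose F := [ffun i => f i].
have GF : Gk K F.
  apply/forallP => a; have -> : [set i | F i == a] = [set i | f i == a] by apply/setP => i; rewrite !inE ffunE.
  by rewrite kap.
have le1 : forall a i, (f i == a : nat) <= X a i.
  move=> a i; case: eqP => [<-|//]; exact: fe (in_setT i).
have hc' : forall i, \sum_a (X a i - (f i == a)) = M.
  move=> i; rewrite sumnB; last by move=> a _; exact: le1.
  rewrite hc (bigD1 (f i)) //= eqxx big1 ?addn0 ?subn1 //.
  by move=> a /negbTE; rewrite eq_sym => ->.
have hr' : forall a, \sum_i (X a i - (f i == a)) = K a * M.
  move=> a; rewrite sumnB; last by move=> i _; exact: le1.
  by rewrite hr sum_bool_card kap mulnSr addnK.
have [w' [w's w'x]] := IH (fun a i => X a i - (f i == a)) K hc' hr'.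
exists (fun g => w' g + (g == F)); split.
  rewrite big_split /= w's (bigD1 F) //= eqxx big1 ?addn0 ?addn1 //.
  by move=> g /andP [_ /negbTE ->].
move=> a i; rewrite big_split /= -w'x.
have -> : \sum_(g | Gk K g && (g i == a)) (g == F : nat) = (f i == a).
  case: (boolP (f i == a)) => fia.
    rewrite (bigD1 F) /=; last by rewrite GF ffunE fia.
    rewrite eqxx big1 ?addn0 //; by move=> g /andP [_ /negbTE ->].
  rewrite big1 // => g /andP [_ gia]; case: eqP => // gF.
  by rewrite gF ffunE (negbTE fia) in gia.
by rewrite subnK.
Qed.

Lemma kappa_sum (R : finPzRingType) (Gamma : finType) (f : {ffun Gamma -> R}) :
  \sum_(a : R) kappa f a = #|Gamma|.
Proof. exact: card_part. Qed.

Lemma kappa_ring (R : finPzRingType) (Gamma : finType) (f : {ffun Gamma -> R}) :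
  (\sum_(i : Gamma) f i)%R = (\sum_(a : R) a *+ kappa f a)%R.
Proof.
rewrite (partition_big f xpredT) //=; apply: eq_big => [//| a _].
rewrite /kappa -sumr_const; apply: eq_big => [i|i /eqP -> //].
by rewrite inE.
Qed.

Theorem proposition1 (R : finPzRingType) (Gamma : finType) (M : nat)
  (k : R -> nat)
  (hk0 : (\sum_(alpha : R | alpha != 0) (alpha *+ k alpha))%R = 0%R)
  (hkN : (\sum_(alpha : R | alpha != 0%R) k alpha <= #|Gamma|)%N)
  (x : R -> Gamma -> nat)
  (hx1 : forall alpha : R, alpha != 0%R ->
           (\sum_(i : Gamma) x alpha i)%N = (k alpha * M)%N)
  (hx2 : forall i : Gamma, (\sum_(alpha : R | alpha != 0%R) x alpha i <= M)%N) :
  exists w : {ffun Gamma -> R} -> nat,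
    (\sum_(a | spc_k k a) w a)%N = M /\
    forall (alpha : R) (i : Gamma), alpha != 0%R ->
      x alpha i = (\sum_(a | spc_k k a && (a i == alpha)) w a)%N.
Proof.
pose X := fun (a : R) (i : Gamma) => if a == 0%R then M - \sum_(b | b != 0%R) x b i else x a i.
pose K := fun a : R => if a == 0%R then #|Gamma| - \sum_(b | b != 0%R) k b else k a.
have hc : forall i, \sum_a X a i = M.
  move=> i; rewrite (bigD1 0%R) //= /X eqxx.
  rewrite [Y in _ + Y](eq_bigr (fun a => x a i)); last by move=> a /negbTE ->.
  by rewrite subnK.
have hr : forall a, \sum_i X a i = K a * M.
  move=> a; rewrite /X /K; case: eqP => [_|/eqP an]; last exact: hx1.
  rewrite sumnB; last by move=> i _; exact: hx2.
  rewrite sum_nat_const exchange_big /=.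
  under eq_bigr => b bn do rewrite (hx1 b bn).
  by rewrite -big_distrl /= mulnBl.
have [w [ws wx]] := @gen R Gamma 0%R M X K hc hr.
have eqP' : forall f : {ffun Gamma -> R}, spc_k k f = Gk K f.
  move=> f; rewrite /spc_k /spc /Gk.
  have ks := @kappa_sum R Gamma f.
  apply/idP/idP => [/andP [hs /forallP hk] | /forallP hk].
    apply/forallP => a; rewrite /K; case: (eqVneq a 0%R) => [->|an]; last first.
      by have := hk a; rewrite an.
    apply/eqP; rewrite -ks (bigD1 0%R) //=.
    under eq_bigr => b bn do rewrite (eqP (implyP (hk b) bn)).
    by rewrite addnK.
  apply/andP; split.
    rewrite (@kappa_ring R Gamma f) (bigD1 0%R) //= mul0rn add0r.
    rewrite (eq_bigr (fun a => a *+ k a)%R); first by rewrite hk0.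
    by move=> a an; have := hk a; rewrite /K (negbTE an) /kappa => /eqP ->.
  apply/forallP => a; apply/implyP => an.
  by have := hk a; rewrite /K (negbTE an).
exists w; split.
  by rewrite -ws; apply: eq_bigl => f; rewrite eqP'.
move=> a i an; have -> : x a i = X a i.
  rewrite /X; case: ifP => // /eqP az; exfalso; move/eqP: an; apply; exact: az.
by rewrite wx; apply: eq_bigl => f; rewrite eqP'.
Qed.
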